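(* Let $1\le k\le m$ and let $\phi_{m,k}$ be the automorphism of the free group $F_{m+k}=F(A_1,\dots,A_m,B_1,\dots,B_k)$ described below. Then $\operatorname{gr}_{\phi_{m,k}}(n)\succeq n^k$ and $\operatorname{gr}_{(\phi_{m,k})^{-1}}(n)\succeq n^k$.
   Context: $\phi_{m,k}(A_i)=A_1\cdots A_{i-1}A_iA_{i-1}^{-1}\cdots A_1^{-1}$ for $1\le i\le m$, and $\phi_{m,k}(B_j)=A_1\cdots A_m(B_1\cdots B_j)A_{j-1}^{-1}\cdots A_1^{-1}$ for $1\le j\le k$. $\operatorname{gr}_\psi(n)=\max_{x}\|\psi^n(x)\|$ over the free basis, $\|\cdot\|$ being word length. $f\succeq g$ means $g(n)\le Af(n)+B$ for some $A>0,B\ge0$ and all $n$. *)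

(* Defs.v *)
From mathcomp Require Import all_boot.
Set Implicit Arguments. Unset Strict Implicit. Unset Printing Implicit Defensive.

(* Free group F_N on generators x_0,...,x_{N-1}.  A letter (i,true) is x_i,
   (i,false) is x_i^{-1}.  Elements are represented by freely reduced words. *)
Definition letter := (nat * bool)%type.
Definition word := seq letter.

Definition linv (l : letter) : letter := (l.1, ~~ l.2).
Definition winv (w : word) : word := rev (map linv w).

Definition reduce (w : word) : word :=
  foldr (fun l acc => match acc with
                      | l' :: acc' => if l' == linv l then acc' else l :: acc
                      | [::] => [:: l] end) [::] w.

Definition subst (f : nat -> word) (w : word) : word :=
  reduce (flatten (map (fun l => if l.2 then f l.1 else winv (f l.1)) w)).

Definition iter_len (f : nat -> word) (n i : nat) : nat :=
  size (iter n (subst f) [:: (i, true)]).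

Definition gr (N : nat) (f : nat -> word) (n : nat) : nat :=
  \max_(i < N) iter_len f n i.

Definition dominates (F G : nat -> nat) : Prop :=
  exists A B : nat, 0 < A /\ forall n, G n <= A * F n + B.

(* phi_{m,k} on F(A_1..A_m,B_1..B_k): A_{a+1} is generator a (a < m),
   B_{b+1} is generator m+b (b < k).  Other indices are fixed (irrelevant). *)
Definition phi (m k : nat) (i : nat) : word :=
  if i < m then
    [seq (t, true) | t <- iota 0 i] ++ [:: (i, true)]
      ++ [seq (t, false) | t <- rev (iota 0 i)]
  else if i < m + k then
    let b := i - m in
    [seq (t, true) | t <- iota 0 m] ++ [seq (m + t, true) | t <- iota 0 b.+1]
      ++ [seq (t, false) | t <- rev (iota 0 b)]
  else [:: (i, true)].

Definition is_inverse (N : nat) (f g : nat -> word) : Prop :=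
  (forall i, i < N -> all (fun l : letter => l.1 < N) (g i)) /\
  (forall i, i < N -> subst g (f i) = [:: (i, true)]) /\
  (forall i, i < N -> subst f (g i) = [:: (i, true)]).

(* Main.v *)
Require Import Defs.
From Stdlib Require Import Setoid Morphisms.
From mathcomp Require Import all_boot all_order all_algebra zify ring.

Definition step (l : letter) (acc : word) : word :=
  match acc with
  | l' :: acc' => if l' == linv l then acc' else l :: acc
  | [::] => [:: l] end.

Lemma reduceE w : reduce w = foldr step [::] w.
Proof. by []. Qed.

Fixpoint reduced (w : word) : bool :=
  match w with
  | a :: ((b :: _) as t) => (b != linv a) && reduced t
  | _ => true end.

Lemma linvK : involutive linv.
Proof. by case=> a b; rewrite /linv /= negbK. Qed.

Lemma reduced_tl a t : reduced (a :: t) -> reduced t.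
Proof. by case: t => // b t /andP[]. Qed.

Lemma step_red l acc : reduced acc -> reduced (step l acc).
Proof.
case: acc => [|l' acc] //= H.
case: ifP => E; first exact: reduced_tl H.
by rewrite /= E H.
Qed.

Lemma foldr_red acc u : reduced acc -> reduced (foldr step acc u).
Proof. by move=> H; elim: u => //= l u IH; apply: step_red. Qed.

Lemma reduce_red w : reduced (reduce w).
Proof. exact: foldr_red. Qed.

Lemma step_cancel l acc : reduced acc -> step l (step (linv l) acc) = acc.
Proof.
case: acc => [|l' acc] /=; first by case: eqP.
rewrite linvK; case: (eqVneq l' l) => [->|ne] H.
  case: acc H => [|l'' acc] //= /andP[ne' _].
  by rewrite (negbTE ne').
by rewrite /= eqxx.
Qed.

Lemma foldr_step acc l r : reduced acc ->
  foldr step acc (step l r) = step l (foldr step acc r).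
Proof.
move=> H; case: r => [|l' r] //=.
case: (eqVneq l' (linv l)) => [->|ne] //=.
by rewrite step_cancel //; apply: foldr_red.
Qed.

Lemma foldr_reduce acc u : reduced acc ->
  foldr step acc (reduce u) = foldr step acc u.
Proof.
move=> H; elim: u => //= l u IH.
by rewrite foldr_step // IH.
Qed.

Lemma reduce_id r : reduced r -> reduce r = r.
Proof.
elim: r => //= l r IH H.
rewrite IH; last exact: reduced_tl H.
case: r H {IH} => //= b r /andP[ne _].
by rewrite (negbTE ne).
Qed.

Lemma reduceK w : reduce (reduce w) = reduce w.
Proof. exact/reduce_id/reduce_red. Qed.

Lemma reduce_cat u v : reduce (u ++ v) = foldr step (reduce v) u.
Proof. by rewrite !reduceE foldr_cat. Qed.

Lemma reduce_catl u v : reduce (reduce u ++ v) = reduce (u ++ v).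
Proof. by rewrite !reduce_cat foldr_reduce // reduce_red. Qed.

Lemma reduce_catr u v : reduce (u ++ reduce v) = reduce (u ++ v).
Proof. by rewrite !reduce_cat reduceK. Qed.

Lemma red_in x u y : reduce (x ++ u ++ y) = reduce (x ++ reduce u ++ y).
Proof. by rewrite -reduce_catr -[in RHS]reduce_catr reduce_catl. Qed.

Lemma winv_cat u v : winv (u ++ v) = winv v ++ winv u.
Proof. by rewrite /winv map_cat rev_cat. Qed.

Lemma winvK : involutive winv.
Proof. by move=> w; rewrite /winv map_rev revK -map_comp map_id_in // => x _; exact: linvK. Qed.

Lemma winv_cons l w : winv (l :: w) = winv w ++ [:: linv l].
Proof. by rewrite -cat1s winv_cat. Qed.

Lemma red_cancel w y : reduce (w ++ winv w ++ y) = reduce y.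
Proof.
elim: w y => // l w IH y.
have E : forall s, reduce (l :: s) = step l (reduce s) by [].
rewrite winv_cons -(catA (winv w)) cat_cons E IH.
change (step l (step (linv l) (reduce y)) = reduce y).
by rewrite step_cancel // reduce_red.
Qed.

Lemma red_cancel' w y : reduce (winv w ++ w ++ y) = reduce y.
Proof. by rewrite -{2}(winvK w) red_cancel. Qed.

Lemma red_cancelx x w y : reduce (x ++ w ++ winv w ++ y) = reduce (x ++ y).
Proof. by rewrite reduce_cat red_cancel -reduce_cat. Qed.

Lemma red_cancelx' x w y : reduce (x ++ winv w ++ w ++ y) = reduce (x ++ y).
Proof. by rewrite reduce_cat red_cancel' -reduce_cat. Qed.

Lemma red_sub x u u' y : reduce u = reduce u' ->
  reduce (x ++ u ++ y) = reduce (x ++ u' ++ y).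
Proof. by move=> E; rewrite red_in E -red_in. Qed.


Lemma red_l a a' b : reduce a = reduce a' -> reduce (a ++ b) = reduce (a' ++ b).
Proof. by move=> E; rewrite -reduce_catl E reduce_catl. Qed.
Lemma red_r a b b' : reduce b = reduce b' -> reduce (a ++ b) = reduce (a ++ b').
Proof. by move=> E; rewrite -reduce_catr E reduce_catr. Qed.
Lemma red_winv u v : reduce u = reduce v -> reduce (winv u) = reduce (winv v).
Proof.
move=> E.
rewrite -(cats0 (winv u)) (red_r (winv u) _ _ (esym (red_cancel v [::]))).
by rewrite (red_sub (winv u) _ _ _ (esym E)) red_cancel' cats0.
Qed.

Definition img (g : nat -> word) (l : letter) : word :=
  if l.2 then g l.1 else winv (g l.1).
Definition F (g : nat -> word) (w : word) : word := flatten (map (img g) w).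

Lemma substE g w : subst g w = reduce (F g w).
Proof. by []. Qed.

Lemma F_cat g u v : F g (u ++ v) = F g u ++ F g v.
Proof. by rewrite /F map_cat flatten_cat. Qed.
Lemma F_cons g l w : F g (l :: w) = img g l ++ F g w.
Proof. by []. Qed.
Lemma F1 g l : F g [:: l] = img g l.
Proof. by rewrite F_cons cats0. Qed.
Lemma img_linv g l : img g (linv l) = winv (img g l).
Proof. by case: l => a [] //=; rewrite /img /= winvK. Qed.
Lemma F_winv g w : F g (winv w) = winv (F g w).
Proof.
elim: w => // l w IH.
by rewrite winv_cons F_cat IH F1 F_cons winv_cat img_linv.
Qed.

Definition Pw j : word := [seq (t, true) | t <- iota 0 j].
Definition Rw j : word := [seq (t, true) | t <- rev (iota 0 j)].
Definition Qw m j : word := [seq (m + t, true) | t <- iota 0 j].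

Lemma winv_map (h : nat -> nat) s :
  winv [seq (h t, true) | t <- s] = [seq (h t, false) | t <- rev s].
Proof. by rewrite /winv map_rev -map_comp. Qed.

Lemma Pw_S j : Pw j.+1 = Pw j ++ [:: (j, true)].
Proof. by rewrite /Pw -addn1 iotaD map_cat. Qed.
Lemma Rw_S j : Rw j.+1 = (j, true) :: Rw j.
Proof. by rewrite /Rw -addn1 iotaD rev_cat. Qed.
Lemma Qw_S m j : Qw m j.+1 = Qw m j ++ [:: (m + j, true)].
Proof. by rewrite /Qw -addn1 iotaD map_cat. Qed.

Lemma phiA m k i : i < m -> phi m k i = Pw i ++ (i, true) :: winv (Pw i).
Proof. by move=> H; rewrite /phi H /Pw winv_map. Qed.
Lemma phiB m k b : b < k -> phi m k (m + b) = Pw m ++ Qw m b.+1 ++ winv (Pw b).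
Proof.
move=> H; rewrite /phi ltnNge leq_addr /= ltn_add2l H addKn.
by rewrite /Pw /Qw winv_map.
Qed.

Definition psi (m k : nat) (i : nat) : word :=
  if i < m then winv (Rw i) ++ (i, true) :: Rw i
  else if i < m + k then
    (if i - m is b.+1 then winv (Rw b) ++ [:: (m + b, false); (i, true)] ++ Rw b.+1
     else winv (Rw m) ++ [:: (i, true)])
  else [:: (i, true)].

Lemma psiA m k i : i < m -> psi m k i = winv (Rw i) ++ (i, true) :: Rw i.
Proof. by move=> H; rewrite /psi H. Qed.
Lemma psiB0 m k : 0 < k -> psi m k m = winv (Rw m) ++ [:: (m, true)].
Proof. by move=> H; rewrite /psi ltnn -{1}(addn0 m) ltn_add2l H subnn. Qed.
Lemma psiBS m k b : b.+1 < k ->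
  psi m k (m + b.+1) = winv (Rw b) ++ [:: (m + b, false); (m + b.+1, true)] ++ Rw b.+1.
Proof. by move=> H; rewrite /psi ltnNge leq_addr /= ltn_add2l H addKn. Qed.

Lemma img_true g a : img g (a, true) = g a.
Proof. by []. Qed.

Lemma FpsiP m k j : j <= m -> reduce (F (psi m k) (Pw j)) = reduce (Rw j).
Proof.
elim: j => // j IH H.
rewrite Pw_S F_cat F1 img_true psiA // (red_l _ _ _ (IH (ltnW H))).
by rewrite -(cats0 (_ :: Rw j)) red_cancel cats0 Rw_S.
Qed.

Lemma FpsiQ m k b : b < k ->
  reduce (F (psi m k) (Qw m b.+1)) = reduce (winv (Rw m) ++ (m + b, true) :: Rw b).
Proof.
elim: b => [|b IH] H.
  by rewrite /Qw /= F1 img_true addn0 psiB0.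
rewrite Qw_S F_cat F1 img_true psiBS // (red_l _ _ _ (IH (ltnW H))).
set X := winv (Rw m) ++ [:: (m + b, true)].
set Y := [:: (m + b, false); (m + b.+1, true)] ++ Rw b.+1.
have -> : (winv (Rw m) ++ (m + b, true) :: Rw b) ++ winv (Rw b) ++ Y
   = X ++ Rw b ++ winv (Rw b) ++ Y by rewrite /X -!catA.
rewrite red_cancelx.
have -> : X ++ Y = winv (Rw m) ++ [:: (m + b, true)] ++ winv [:: (m + b, true)]
   ++ (m + b.+1, true) :: Rw b.+1 by rewrite /X -!catA.
by rewrite red_cancelx.
Qed.

Lemma FphiR m k j : j <= m -> reduce (F (phi m k) (Rw j)) = reduce (Pw j).
Proof.
elim: j => // j IH H.
rewrite Rw_S F_cons img_true phiA //.
rewrite -catA -cat1s -!catA (red_r _ _ _ (red_r _ _ _ (red_r _ _ _ (IH (ltnW H))))).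
have -> : Pw j ++ [:: (j, true)] ++ winv (Pw j) ++ Pw j
  = (Pw j ++ [:: (j, true)]) ++ winv (Pw j) ++ Pw j ++ [::] by rewrite cats0 -!catA.
by rewrite red_cancelx' cats0 Pw_S.
Qed.

Definition eqr (u v : word) := reduce u = reduce v.
#[export] Instance eqr_equiv : Equivalence eqr.
Proof. split; rewrite /eqr; [by []|by move=> ??->|by move=> ???->]. Qed.
#[export] Instance cat_proper : Proper (eqr ==> eqr ==> eqr) (@cat letter).
Proof. move=> a a' Ha b b' Hb; rewrite /eqr -reduce_catl Ha reduce_catl -reduce_catr Hb reduce_catr //. Qed.
#[export] Instance winv_proper : Proper (eqr ==> eqr) winv.
Proof. move=> a b H; exact: red_winv. Qed.

Lemma eqr_cancel w y : eqr (w ++ winv w ++ y) y.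
Proof. exact: red_cancel. Qed.
Lemma eqr_cancel' w y : eqr (winv w ++ w ++ y) y.
Proof. exact: red_cancel'. Qed.
Lemma eqr_cancel0 w : eqr (w ++ winv w) [::].
Proof. by rewrite -(cats0 (winv w)); exact: red_cancel. Qed.
Lemma eqr_cancel0' w : eqr (winv w ++ w) [::].
Proof. by rewrite -{2}(cats0 w); exact: red_cancel'. Qed.

Lemma img_false g a : img g (a, false) = winv (g a).
Proof. by []. Qed.

Lemma phiA' m k i : i < m -> phi m k i = Pw i ++ [:: (i, true)] ++ winv (Pw i).
Proof. exact: phiA. Qed.
Lemma psiA' m k i : i < m -> psi m k i = winv (Rw i) ++ [:: (i, true)] ++ Rw i.
Proof. exact: psiA. Qed.

Lemma comp1 m k i : 1 <= k -> k <= m -> i < m + k ->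
  subst (psi m k) (phi m k i) = [:: (i, true)].
Proof.
move=> hk hkm hi; rewrite substE.
suff : eqr (F (psi m k) (phi m k i)) [:: (i, true)] by [].
case: (ltnP i m) => him.
  rewrite phiA' // !F_cat F_winv F1 img_true psiA' //.
  rewrite (FpsiP m k i (ltnW him) : eqr _ _) -!catA eqr_cancel eqr_cancel0 cats0.
  reflexivity.
have Eb : i = m + (i - m) by rewrite subnKC.
move: (i - m) Eb => b Eb; subst i.
have hb : b < k by rewrite -(ltn_add2l m).
have hbm : b <= m by apply: leq_trans (ltnW hb) hkm.
rewrite phiB // !F_cat F_winv.
rewrite (FpsiP m k m (leqnn m) : eqr _ _) (FpsiP m k b hbm : eqr _ _).
rewrite (FpsiQ m k b hb : eqr _ _) -!catA eqr_cancel -cat1s -catA eqr_cancel0 cats0.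
reflexivity.
Qed.

Lemma F0 g : F g [::] = [::].
Proof. by []. Qed.

Lemma comp2 m k i : 1 <= k -> k <= m -> i < m + k ->
  subst (phi m k) (psi m k i) = [:: (i, true)].
Proof.
move=> hk hkm hi; rewrite substE.
suff : eqr (F (phi m k) (psi m k i)) [:: (i, true)] by [].
case: (ltnP i m) => him.
  rewrite psiA' // !F_cat F_winv F1 img_true phiA' //.
  rewrite (FphiR m k i (ltnW him) : eqr _ _) -!catA eqr_cancel' eqr_cancel0' cats0.
  reflexivity.
have Eb : i = m + (i - m) by rewrite subnKC.
move: (i - m) Eb => b Eb; subst i.
have hb : b < k by rewrite -(ltn_add2l m).
case: b hb {him hi} => [|b] hb.
  rewrite addn0 psiB0 // F_cat F_winv F1 img_true.
  have := phiB m k 0 hk; rewrite addn0 => ->.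
  rewrite (FphiR m k m (leqnn m) : eqr _ _) eqr_cancel'.
  rewrite /Qw /Pw /= addn0; reflexivity.
have hbm : b < m by apply: leq_trans (ltnW hb) hkm.
rewrite psiBS // !F_cat !F_cons F0 img_false img_true F_winv.
rewrite (phiB m k b (ltnW hb)) (phiB m k b.+1 hb) (Qw_S m b.+1) !winv_cat winvK.
rewrite (FphiR m k b (ltnW hbm) : eqr _ _) (FphiR m k b.+1 hbm : eqr _ _).
rewrite -!catA !eqr_cancel' cat0s eqr_cancel0' cats0; reflexivity.
Qed.

Section Part5.
Import GRing.Theory Num.Theory.
Local Open Scope ring_scope.

Definition sgn (l : letter) : int := if l.2 then 1 else -1.
Definition W (g : nat -> int) (w : word) : int := \sum_(l <- w) sgn l * g l.1.
Definition delta (s : nat) : nat -> int := fun t => (t == s)%:Z.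

Lemma W_cat g u v : W g (u ++ v) = W g u + W g v.
Proof. by rewrite /W big_cat. Qed.
Lemma W_cons g l w : W g (l :: w) = sgn l * g l.1 + W g w.
Proof. by rewrite /W big_cons. Qed.
Lemma W_nil g : W g [::] = 0.
Proof. by rewrite /W big_nil. Qed.

Lemma sgn_linv l : sgn (linv l) = - sgn l.
Proof. by case: l => a [] //=; rewrite /sgn /= opprK. Qed.

Lemma W_step g l acc : W g (step l acc) = sgn l * g l.1 + W g acc.
Proof.
case: acc => [|l' acc] /=; first by rewrite W_cons W_nil.
case: eqP => [->|_]; last by rewrite W_cons.
by rewrite W_cons sgn_linv /= addrA mulNr addrN add0r.
Qed.

Lemma W_reduce g w : W g (reduce w) = W g w.
Proof.
elim: w => [|l w IH] //.
by rewrite reduceE /= -reduceE W_step IH W_cons.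
Qed.

Lemma W_winv g w : W g (winv w) = - W g w.
Proof.
rewrite /W /winv big_rev big_map -sumrN; apply: eq_bigr => l _.
by rewrite sgn_linv mulNr.
Qed.

Lemma W_F g f w : W g (F f w) = W (fun t => W g (f t)) w.
Proof.
elim: w => [|l w IH]; first by rewrite /F /= !W_nil.
rewrite F_cons W_cat IH W_cons; congr (_ + _).
case: l => a [] /=; rewrite /img /sgn /=; first by rewrite mul1r.
by rewrite W_winv mulN1r.
Qed.

Lemma W_subst g f w : W g (subst f w) = W (fun t => W g (f t)) w.
Proof. by rewrite substE W_reduce W_F. Qed.

Definition inb (N : nat) (w : word) := all (fun l : letter => (l.1 < N)%N) w.

Lemma W_eq_in N g g' w : inb N w -> (forall t, (t < N)%N -> g t = g' t) -> W g w = W g' w.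
Proof.
move=> /allP H E; rewrite /W; apply: eq_big_seq => l /H /= Hl.
by rewrite E.
Qed.

Lemma W_add g h w : W (fun t => g t + h t) w = W g w + W h w.
Proof. by rewrite /W -big_split /=; apply: eq_bigr => l _; rewrite mulrDr. Qed.
Lemma W_sub g h w : W (fun t => g t - h t) w = W g w - W h w.
Proof. by rewrite /W -sumrB /=; apply: eq_bigr => l _; rewrite mulrBr. Qed.

Lemma W_size s w : (absz (W (delta s) w) <= size w)%N.
Proof.
elim: w => [|l w IH]; first by rewrite W_nil.
rewrite W_cons /=.
have : (absz (sgn l * delta s l.1)%R <= 1)%N.
  by rewrite /sgn /delta; case: (l.2); case: (l.1 == s).
lia.
Qed.

Lemma W_decomp N g w : inb N w -> W g w = \sum_(t < N) W (delta t) w * g t.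
Proof.
elim: w => [|l w IH] H.
  by rewrite W_nil big1 // => t _; rewrite W_nil mul0r.
move: H; rewrite /inb /= => /andP[Hl H].
rewrite W_cons IH //.
under eq_bigr => t _ do rewrite W_cons mulrDl.
rewrite big_split /=; congr (_ + _).
rewrite (bigD1 (Ordinal Hl)) //= big1 ?addr0.
  by rewrite /delta eqxx mulr1.
move=> t /eqP Ht; rewrite /delta.
case: eqP => [E|]; last by rewrite mulr0 mul0r.
by exfalso; apply: Ht; apply: val_inj; rewrite /= E.
Qed.

Lemma W_ge0 N g w : inb N w -> (forall t, (t < N)%N -> 0 <= W (delta t) w) ->
  (forall t, (t < N)%N -> 0 <= g t) -> 0 <= W g w.
Proof.
move=> H Hc Hg; rewrite (W_decomp _ g _ H); apply: sumr_ge0 => t _.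
by apply: mulr_ge0; [apply: Hc | apply: Hg].
Qed.

Lemma W_mono N g g' w : inb N w -> (forall t, (t < N)%N -> 0 <= W (delta t) w) ->
  (forall t, (t < N)%N -> g t <= g' t) -> W g w <= W g' w.
Proof.
move=> H Hc Hg; rewrite -subr_ge0 -W_sub; apply: (W_ge0 _ _ _ H Hc) => t Ht.
by rewrite subr_ge0 Hg.
Qed.

End Part5.

Section Part6.
Import GRing.Theory Num.Theory.
Local Open Scope ring_scope.

Lemma inb_cat N u v : inb N (u ++ v) = inb N u && inb N v.
Proof. exact: all_cat. Qed.
Lemma inb_cons N l w : inb N (l :: w) = (l.1 < N)%N && inb N w.
Proof. by []. Qed.
Lemma inb_winv N w : inb N (winv w) = inb N w.
Proof. by rewrite /inb /winv all_rev all_map; apply: eq_all => l. Qed.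
Lemma inb_step N l acc : (l.1 < N)%N -> inb N acc -> inb N (step l acc).
Proof.
case: acc => [|l' acc] /= Hl H; first by rewrite /inb /= Hl.
case: ifP => _; first by move: H; rewrite /inb /= => /andP[].
by rewrite /inb /= Hl.
Qed.
Lemma inb_reduce N w : inb N w -> inb N (reduce w).
Proof.
elim: w => // l w IH; rewrite inb_cons => /andP[Hl H].
by rewrite reduceE /= -reduceE; apply: inb_step => //; apply: IH.
Qed.
Lemma inb_F N f w : (forall t, (t < N)%N -> inb N (f t)) -> inb N w -> inb N (F f w).
Proof.
move=> Hf; elim: w => // l w IH; rewrite inb_cons => /andP[Hl H].
rewrite F_cons inb_cat IH // andbT.
by case: l Hl => a [] /= Hl; rewrite /img /= ?inb_winv Hf.
Qed.
Lemma inb_subst N f w : (forall t, (t < N)%N -> inb N (f t)) -> inb N w -> inb N (subst f w).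
Proof. by move=> Hf Hw; rewrite substE; apply/inb_reduce/inb_F. Qed.
Lemma inb_iter N f n w : (forall t, (t < N)%N -> inb N (f t)) -> inb N w ->
  inb N (iter n (subst f) w).
Proof. by move=> Hf Hw; elim: n => //= n IH; apply: inb_subst. Qed.

Lemma inb_Pw N j : (j <= N)%N -> inb N (Pw j).
Proof. move=> H; rewrite /inb /Pw all_map; apply/allP => t; rewrite mem_iota /=; lia. Qed.
Lemma inb_Rw N j : (j <= N)%N -> inb N (Rw j).
Proof. move=> H; rewrite /inb /Rw all_map all_rev; apply/allP => t; rewrite mem_iota /=; lia. Qed.
Lemma inb_Qw N m j : (m + j <= N)%N -> inb N (Qw m j).
Proof. move=> H; rewrite /inb /Qw all_map; apply/allP => t; rewrite mem_iota /=; lia. Qed.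

Lemma inb_phi m k t : (t < m + k)%N -> inb (m + k) (phi m k t).
Proof.
move=> Ht; case: (ltnP t m) => Htm.
  have HP : inb (m + k) (Pw t) by apply: inb_Pw; lia.
  by rewrite phiA // inb_cat inb_cons inb_winv HP Ht.
have Eb : t = (m + (t - m))%N by rewrite subnKC.
move: (t - m)%N Eb => b Eb; subst t.
have HP : inb (m + k) (Pw m) by apply: inb_Pw; lia.
have HP' : inb (m + k) (Pw b) by apply: inb_Pw; lia.
have HQ : inb (m + k) (Qw m b.+1) by apply: inb_Qw; lia.
by rewrite phiB; [rewrite !inb_cat inb_winv HP HP' HQ | lia].
Qed.

Lemma inb_psi m k t : (t < m + k)%N -> inb (m + k) (psi m k t).
Proof.
move=> Ht; rewrite /psi; case: ifP => Htm.
  have HR : inb (m + k) (Rw t) by apply: inb_Rw; lia.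
  by rewrite inb_cat inb_winv inb_cons HR Ht.
rewrite Ht; case E: (t - m)%N => [|b].
  have HR : inb (m + k) (Rw m) by apply: inb_Rw; lia.
  by rewrite inb_cat inb_winv HR inb_cons Ht.
have HR : inb (m + k) (Rw b) by apply: inb_Rw; lia.
have HR' : inb (m + k) (Rw b.+1) by apply: inb_Rw; lia.
rewrite !inb_cat inb_winv HR HR' !inb_cons Ht /= andbT; lia.
Qed.

Lemma WP s j : W (delta s) (Pw j) = (s < j)%N%:Z.
Proof.
elim: j => [|j IH]; first by rewrite W_nil.
rewrite Pw_S W_cat IH W_cons W_nil /delta /sgn /=; lia.
Qed.
Lemma WR s j : W (delta s) (Rw j) = (s < j)%N%:Z.
Proof.
elim: j => [|j IH]; first by rewrite W_nil.
rewrite Rw_S W_cons IH /delta /sgn /=; lia.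
Qed.
Lemma WQ s m j : W (delta s) (Qw m j) = ((m <= s) && (s < m + j))%N%:Z.
Proof.
elim: j => [|j IH]; first by rewrite W_nil; lia.
rewrite Qw_S W_cat IH W_cons W_nil /delta /sgn /=; lia.
Qed.

End Part6.

Section Part7.
Import order.Order.TTheory GRing.Theory Num.Theory.
Local Open Scope ring_scope.

Lemma Wphi_A m k s t : (t < m)%N -> W (delta s) (phi m k t) = (t == s)%:Z.
Proof.
move=> H; rewrite phiA // W_cat W_cons W_winv WP /delta /sgn /=; lia.
Qed.
Lemma Wphi_B m k s b : (b < k)%N -> W (delta s) (phi m k (m + b)) =
  (s < m)%N%:Z + ((m <= s) && (s < m + b.+1))%N%:Z - (s < b)%N%:Z.
Proof. by move=> H; rewrite phiB // !W_cat W_winv WP WQ WP addrA. Qed.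

Lemma Wpsi_A m k s t : (t < m)%N -> W (delta s) (psi m k t) = (t == s)%:Z.
Proof.
move=> H; rewrite psiA // W_cat W_cons W_winv !WR /delta /sgn /=; lia.
Qed.
Lemma Wpsi_B0 m k s : (0 < k)%N -> W (delta s) (psi m k m) = - (s < m)%N%:Z + (m == s)%:Z.
Proof. by move=> H; rewrite psiB0 // W_cat W_winv WR W_cons W_nil /delta /sgn /= addr0 mul1r. Qed.
Lemma Wpsi_BS m k s b : (b.+1 < k)%N -> W (delta s) (psi m k (m + b.+1)) =
  - (s < b)%N%:Z - (m + b == s)%:Z + (m + b.+1 == s)%:Z + (s < b.+1)%N%:Z.
Proof.
move=> H; rewrite psiBS // !W_cat W_winv !WR !W_cons W_nil /delta /sgn /=; lia.
Qed.

Lemma split_t m k t : (t < m + k)%N -> (t < m)%N \/ exists2 b, (b < k)%N & t = (m + b)%N.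
Proof.
move=> H; case: (ltnP t m) => Htm; [by left|right].
exists (t - m)%N; [lia | by rewrite subnKC].
Qed.

Definition xs (f : nat -> word) (m k n : nat) : word :=
  iter n (subst f) [:: ((m + k).-1, true)].

Lemma W1 s a : W (delta s) [:: (a, true)] = (a == s)%:Z.
Proof. by rewrite W_cons W_nil /sgn /delta /= mul1r addr0. Qed.

Lemma inb_x0 m k : (0 < k)%N -> inb (m + k) [:: ((m + k).-1, true)].
Proof. move=> hk; rewrite inb_cons /= andbT; lia. Qed.

Lemma phi_growth m k (hk : (1 <= k)%N) (hkm : (k <= m)%N) n :
  [/\ forall c, (c < k)%N -> ('C(n, k - 1 - c))%:Z <= W (delta (m + c)) (xs (phi m k) m k n),
      ('C(n, k))%:Z <= W (delta m.-1) (xs (phi m k) m k n) &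
      forall t, (t < m + k)%N -> 0 <= W (delta t) (xs (phi m k) m k n)].
Proof.
elim: n => [|n [IHb IHa IH0]].
  rewrite /xs /=; split.
  - move=> c Hc; rewrite W1 bin0n; lia.
  - rewrite W1 bin0n; lia.
  - by move=> t _; rewrite W1.
have Hin : inb (m + k) (xs (phi m k) m k n).
  by apply: inb_iter; [exact: inb_phi | exact: inb_x0].
have xsS : xs (phi m k) m k n.+1 = subst (phi m k) (xs (phi m k) m k n) by [].
split.
- move=> c Hc; rewrite xsS W_subst.
  case: (ltnP c.+1 k) => Hc1.
    apply: (le_trans _ (W_mono _ (fun t => delta (m + c) t + delta (m + c.+1) t) _ _ Hin IH0 _)).
      rewrite W_add.
      have E : (k - 1 - c = (k - 1 - c.+1).+1)%N by lia.
      have H1 := IHb c Hc; have H2 := IHb c.+1 Hc1.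
      rewrite E in H1 *; rewrite binS PoszD lerD //.
    move=> t Ht; case: (split_t _ _ _ Ht) => [Htm | [b Hb ->]].
      by rewrite Wphi_A // /delta; lia.
    rewrite Wphi_B // /delta; lia.
  apply: (le_trans _ (W_mono _ (fun t => delta (m + c) t) _ _ Hin IH0 _)).
    have E : (k - 1 - c = 0)%N by lia.
    by rewrite E bin0 -(bin0 n) -E; exact: IHb.
  move=> t Ht; case: (split_t _ _ _ Ht) => [Htm | [b Hb ->]].
    by rewrite Wphi_A // /delta; lia.
  rewrite Wphi_B // /delta; lia.
- rewrite xsS W_subst.
  apply: (le_trans _ (W_mono _ (fun t => delta m.-1 t + delta (m + 0) t) _ _ Hin IH0 _)).
    rewrite W_add.
    have E : (k = (k - 1).+1)%N by lia.
    rewrite E binS PoszD lerD //; rewrite -E //.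
    have := IHb 0%N hk; by rewrite subn0.
  move=> t Ht; case: (split_t _ _ _ Ht) => [Htm | [b Hb ->]].
    by rewrite Wphi_A // /delta; lia.
  rewrite Wphi_B // /delta; lia.
- move=> t Ht; rewrite xsS W_subst.
  apply: (W_ge0 _ _ _ Hin IH0) => u Hu.
  case: (split_t _ _ _ Hu) => [Htm | [b Hb ->]].
    by rewrite Wphi_A.
  rewrite Wphi_B //; lia.
Qed.

End Part7.

Section Part8.
Import Order.TTheory GRing.Theory Num.Theory.
Local Open Scope ring_scope.

Lemma split3 m k t : (t < m + k)%N ->
  [\/ (t < m)%N, t = (m + 0)%N | exists2 b, (b.+1 < k)%N & t = (m + b.+1)%N].
Proof.
move=> H; case: (ltnP t m) => Htm; first by constructor 1.
case E: (t - m)%N => [|b].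
  by constructor 2; lia.
constructor 3; exists b; lia.
Qed.

Lemma W_zero N w : inb N w -> W (delta N) w = 0.
Proof.
move=> H; rewrite (W_eq_in _ _ (fun _ => 0) _ H).
  by rewrite /W big1 // => l _; rewrite mulr0.
by move=> t Ht; rewrite /delta; lia.
Qed.

Lemma psi_growth m k (hk : (1 <= k)%N) (hkm : (k <= m)%N) n :
  (forall c, (c < k)%N -> W (delta (m + c)) (xs (psi m k) m k n) = (-1) ^+ (k - 1 - c) * ('C(n, k - 1 - c))%:Z) /\
  W (delta m.-1) (xs (psi m k) m k n) = (-1) ^+ k * ('C(n, k))%:Z.
Proof.
have Hin : forall n, inb (m + k) (xs (psi m k) m k n).
  by move=> n'; apply: inb_iter; [exact: inb_psi | exact: inb_x0].
elim: n => [|n [IHb IHa]].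
  rewrite /xs /=; split.
  - move=> c Hc; rewrite W1 bin0n.
    case E: (k - 1 - c)%N => [|d]; first by rewrite expr0 mul1r; lia.
    by rewrite mulr0; lia.
  - rewrite W1 bin0n; have -> : (k == 0)%N = false by lia. rewrite mulr0; lia.
have xsS : xs (psi m k) m k n.+1 = subst (psi m k) (xs (psi m k) m k n) by [].
split.
- move=> c Hc; rewrite xsS W_subst.
  rewrite (W_eq_in _ _ (fun t => delta (m + c) t - delta (m + c.+1) t) _ (Hin n)); last first.
    move=> t Ht; case: (split3 _ _ _ Ht) => [Htm | -> | [b Hb ->]].
    + by rewrite Wpsi_A // /delta; lia.
    + by rewrite addn0 Wpsi_B0 // /delta; lia.
    + by rewrite Wpsi_BS // /delta; lia.
  rewrite W_sub IHb //.
  case: (ltnP c.+1 k) => Hc1.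
    rewrite IHb //.
    have E : (k - 1 - c = (k - 1 - c.+1).+1)%N by lia.
    rewrite E binS PoszD exprS; ring.
  have E1 : (c.+1 = k)%N by lia.
  have E : (k - 1 - c = 0)%N by lia.
  by rewrite E1 W_zero // E !bin0 subr0.
- rewrite xsS W_subst.
  rewrite (W_eq_in _ _ (fun t => delta m.-1 t - delta (m + 0) t) _ (Hin n)); last first.
    move=> t Ht; case: (split3 _ _ _ Ht) => [Htm | -> | [b Hb ->]].
    + by rewrite Wpsi_A // /delta; lia.
    + by rewrite addn0 Wpsi_B0 // /delta; lia.
    + by rewrite Wpsi_BS // /delta; lia.
  rewrite W_sub IHa IHb // subn0.
  have E : (k = (k - 1).+1)%N by lia.
  rewrite [in RHS]E [in LHS]E binS PoszD exprS subSS subn0; ring.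
Qed.

End Part8.

Lemma ff n j : (2 * j <= n)%N -> n ^ j <= 2 ^ j * n ^_ j.
Proof.
elim: j => [|j IH] H; first by rewrite expn0 ffactn0.
have H0 : (2 * j <= n)%N by lia.
have H1 := IH H0.
rewrite expnS ffactnSr expnSr.
set P := n ^ j in H1 *; set Q := n ^_ j in H1 *; set T := 2 ^ j in H1 *.
have H2 : n <= 2 * (n - j) by lia.
have : P * n <= (T * Q) * (2 * (n - j)) by apply: leq_mul.
rewrite mulnC; lia.
Qed.

Lemma pow_bound n k : 0 < k -> n ^ k <= 2 ^ k * k`! * 'C(n, k) + (2 * k) ^ k.
Proof.
move=> hk; case: (ltnP n (2 * k)) => H.
  have : n ^ k <= (2 * k) ^ k by rewrite leq_exp2r // ltnW.
  lia.
have := ff _ _ H; rewrite -bin_ffact.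
rewrite [_ * k`!]mulnC mulnA; lia.
Qed.

Section Part10.
Import Order.TTheory GRing.Theory Num.Theory.

Lemma gr_ge N f n i : (i < N)%N -> (iter_len f n i <= gr N f n)%N.
Proof.
move=> Hi; rewrite /gr.
exact: (@leq_bigmax_cond _ xpredT (fun j : 'I_N => iter_len f n j) (Ordinal Hi) isT).
Qed.

Lemma dom_from (f : nat -> word) m k : (1 <= k)%N ->
  (forall n, ('C(n, k) <= size (xs f m k n))%N) ->
  dominates (gr (m + k) f) (fun n => n ^ k)%N.
Proof.
move=> hk H; exists (2 ^ k * k`!)%N, ((2 * k) ^ k)%N; split.
  by rewrite muln_gt0 expn_gt0 fact_gt0.
move=> n.
have H1 : (size (xs f m k n) <= gr (m + k) f n)%N.
  have : ((m + k).-1 < m + k)%N by lia.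
  by move/(gr_ge _ f n).
have H2 := pow_bound n k hk.
have H3 : ('C(n, k) <= gr (m + k) f n)%N by apply: leq_trans (H n) H1.
apply: (leq_trans H2); rewrite leq_add2r; exact: leq_mul.
Qed.

End Part10.

Import GRing.Theory Num.Theory.

Theorem proposition8p12 (m k : nat) (hk1 : 1 <= k) (hkm : k <= m) :
  dominates (gr (m + k) (phi m k)) (fun n => n ^ k) /\
  exists psi : nat -> word,
    is_inverse (m + k) (phi m k) psi /\
    dominates (gr (m + k) psi) (fun n => n ^ k).
Proof.
split.
  apply: dom_from => // n.
  have [_ Ha _] := phi_growth m k hk1 hkm n.
  have := W_size m.-1 (xs (phi m k) m k n); lia.
exists (psi m k); split.
  split; [exact: inb_psi | split => i Hi; [exact: comp1 | exact: comp2]].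
apply: dom_from => // n.
have [_ Ha] := psi_growth m k hk1 hkm n.
have := W_size m.-1 (xs (psi m k) m k n); rewrite Ha.
rewrite -signr_odd; case: (odd k); rewrite ?expr1 ?expr0 ?mulN1r ?mul1r; lia.
Qed.
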